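(* Let $f:F\to F'$ be a morphism of hyperfields. Let $F_1,F_2$ be topological hyperfields whose underlying hyperfield is $F$, such that for each $a\in F'$ the identity map $F_1\to F_2$ restricts to a homeomorphism $f^{-1}(a)\to f^{-1}(a)$, each preimage carrying its subspace topology. Let $*\in\{s,w\}$ and $M\in\operatorname{Gr}^*(r,F'^n)$. Then the identity map $\operatorname{Real}^*_{F_1}(M)\to\operatorname{Real}^*_{F_2}(M)$ is a homeomorphism.
   Context: Hyperfields. A hyperfield $(F,\odot,\boxplus,1,0)$ has the following data and axioms. - $\odot$ is a commutative multiplication and $\boxplus$ is a hyperaddition assigning to each $x,y$ a nonempty subset $x\boxplus y\subseteq F$ (extended to subsets by unions). - $\boxplus$ is commutative and associative, and $x\boxplus 0=\{x\}$. - Each $x$ has a unique $-x$ with $0\in x\boxplus(-x)$, and $x\in y\boxplus z \iff z\in x\boxplus(-y)$. - $(F\setminus\{0\},\odot,1)$ is an abelian group $F^\times$, $0\odot x=0$, and $x\odot(y\boxplus z)=(x\odot y)\boxplus(x\odot z)$. A homomorphism (morphism) $h$ satisfies $h(0)=0$, $h(1)=1$, $h(xy)=h(x)h(y)$ and $h(x\boxplus y)\subseteq h(x)\boxplus h(y)$. A topological hyperfield is a hyperfield with a topology in which $F\setminus\{0\}$ is open, multiplication is continuous, and inversion on $F^\times$ is continuous. Grassmannians. A strong Grassmann–Plücker (GP) function of rank $r$ on $E=\{1,\dots,n\}$ is a function $\varphi:E^r\to F$ with the following properties. - $\varphi$ is not identically $0$. - $\varphi$ is alternating. - For all $(i_1,\dots,i_{r+1})\in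 E^{r+1}$ and $(j_1,\dots,j_{r-1})\in E^{r-1}$: $$0\in\boxplus_{k=1}^{r+1}(-1)^k\varphi(i_1,\dots,\widehat{i_k},\dots,i_{r+1})\odot\varphi(i_k,j_1,\dots,j_{r-1}).$$ A weak GP function is a function $\varphi:E^r\to F$ with the following properties. - $\varphi$ is nonzero and alternating. - Its support $\{\{i_1,\dots,i_r\}:\varphi(i_1,\dots,i_r)\ne0\}$ is the set of bases of a matroid. - The relation holds whenever $|\{i\}\setminus\{j\}|=3$. $\operatorname{Gr}^s(r,F^n)$ and $\operatorname{Gr}^w(r,F^n)$ are the sets of classes of strong, resp. weak, GP functions modulo $\varphi\sim\alpha\varphi$, $\alpha\in F^\times$. For topological $F$ they have the subspace topology of $(F^{E^r}\setminus\{0\})/F^\times$, which carries the product and quotient topologies. Realization spaces. A morphism $f$ induces $\operatorname{Gr}^*(f):[\varphi]\mapsto[f\circ\varphi]$. For $M\in\operatorname{Gr}^*(r,F'^n)$, the realization space $\operatorname{Real}^*_F(M)$ is the preimage $\operatorname{Gr}^*(f)^{-1}(M)\subseteq\operatorname{Gr}^*(r,F^n)$ with the subspace topology. The notation $\operatorname{Real}^*_{F_i}(M)$ indicates which topology on $F$ is used. *)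

(* Defs.v *)
From HB Require Import structures.
From mathcomp Require Import all_boot.
Set Implicit Arguments. Unset Strict Implicit. Unset Printing Implicit Defensive.

(* Hyperfields.  [hadd x y z] means  z \in x [+] y.                    *)
Record hyperfield := HyperField {
  hcar :> Type;
  hmul : hcar -> hcar -> hcar;
  hadd : hcar -> hcar -> hcar -> Prop;
  hone : hcar;
  hzero : hcar;
  hneg : hcar -> hcar;
  hinv : hcar -> hcar;
  hadd_ne : forall x y, exists z, hadd x y z;
  haddC : forall x y z, hadd x y z <-> hadd y x z;
  haddA : forall x y z w,
      (exists u, hadd x y u /\ hadd u z w) <-> (exists u, hadd y z u /\ hadd x u w);
  hadd0 : forall x z, hadd x hzero z <-> z = x;
  hnegP : forall x, hadd x (hneg x) hzero;
  hneg_uniq : forall x y, hadd x y hzero -> y = hneg x;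
  hrev : forall x y z, hadd y z x <-> hadd x (hneg y) z;
  hmulC : forall x y, hmul x y = hmul y x;
  hmulA : forall x y z, hmul x (hmul y z) = hmul (hmul x y) z;
  hmul1 : forall x, hmul hone x = x;
  hone_neq0 : hone <> hzero;
  hmul_neq0 : forall x y, x <> hzero -> y <> hzero -> hmul x y <> hzero;
  hmulV : forall x, x <> hzero -> hmul x (hinv x) = hone;
  hmul0 : forall x, hmul hzero x = hzero;
  hdistr : forall x y z w, hadd (hmul x y) (hmul x z) w <-> exists u, hadd y z u /\ w = hmul x u
}.
Arguments hone {h}. Arguments hzero {h}.

Record hmorph (F F' : hyperfield) := HMorph {
  hm :> F -> F';
  hm0 : hm hzero = hzero;
  hm1 : hm hone = hone;
  hmM : forall x y, hm (hmul x y) = hmul (hm x) (hm y);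
  hmA : forall x y z, hadd x y z -> hadd (hm x) (hm y) (hm z)
}.

Definition opens (X : Type) := (X -> Prop) -> Prop.

Definition is_topology X (T : opens X) :=
  T (fun _ => True) /\
  (forall U V, T U -> T V -> T (fun x => U x /\ V x)) /\
  (forall (I : Type) (U : I -> X -> Prop), (forall i, T (U i)) -> T (fun x => exists i, U i x)).

Definition continuous X Y (TX : opens X) (TY : opens Y) (f : X -> Y) :=
  forall V, TY V -> TX (fun x => V (f x)).

Definition homeomorphism X Y (TX : opens X) (TY : opens Y) (f : X -> Y) :=
  exists g : Y -> X, cancel f g /\ cancel g f /\ continuous TX TY f /\ continuous TY TX g.

Definition sub_top X (T : opens X) (S : X -> Prop) : opens {x : X | S x} :=
  fun U => exists V, T V /\ forall x : {x : X | S x}, U x <-> V (proj1_sig x).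
Arguments sub_top {X} T S.

Definition prod_top X Y (TX : opens X) (TY : opens Y) : opens (X * Y) :=
  fun U => forall p, U p -> exists V W, TX V /\ TY W /\ V p.1 /\ W p.2 /\
      forall q, V q.1 -> W q.2 -> U q.

Fixpoint inL T (x : T) (l : seq T) : Prop :=
  match l with [::] => False | y :: l' => y = x \/ inL x l' end.

(* product topology on I -> A (basic opens: finitely many coordinates constrained) *)
Definition prod_fun_top (I A : Type) (T : opens A) : opens (I -> A) :=
  fun U => forall f, U f -> exists (l : seq I) (V : I -> A -> Prop),
      (forall i, T (V i)) /\ (forall i, inL i l -> V i (f i)) /\
      (forall g, (forall i, inL i l -> V i (g i)) -> U g).
Arguments prod_fun_top I {A} T.

Lemma hinv_neq0 (F : hyperfield) (x : F) : x <> hzero -> hinv x <> hzero.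
Proof.
move=> Hx H; have := hmulV Hx; rewrite H hmulC hmul0 => E.
by apply: (@hone_neq0 F); rewrite E.
Qed.

Definition hinv_nz (F : hyperfield) (x : {x : F | x <> hzero}) : {x : F | x <> hzero} :=
  exist _ (hinv (proj1_sig x)) (hinv_neq0 (proj2_sig x)).

Definition top_hyperfield (F : hyperfield) (T : opens F) :=
  is_topology T /\
  T (fun x : F => x <> hzero) /\
  continuous (prod_top T T) T (fun p => hmul p.1 p.2) /\
  continuous (sub_top T (fun x : F => x <> hzero)) (sub_top T (fun x : F => x <> hzero)) (@hinv_nz F).

(* Grassmann-Pluecker functions on E = 'I_n; E^r = 'I_r -> 'I_n.       *)

Definition swapt n r (i : 'I_r -> 'I_n) (a b : 'I_r) : 'I_r -> 'I_n :=
  fun t => if t == a then i b else if t == b then i a else i t.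

Definition alternating (F : hyperfield) n r (phi : ('I_r -> 'I_n) -> F) :=
  (forall i, ~ injective i -> phi i = hzero) /\
  (forall i (a b : 'I_r), a != b -> phi (swapt i a b) = hneg (phi i)).

Fixpoint hsum (F : hyperfield) (l : seq F) (z : F) : Prop :=
  match l with
  | [::] => z = hzero
  | a :: l' => exists y, hsum l' y /\ hadd a y z
  end.

Definition signpow (F : hyperfield) (k : nat) : F := iter k (hmul (hneg hone)) hone.

Lemma lt_pred_aux (r k : nat) : k.+1 < r -> k < r.-1.
Proof. by case: r. Qed.

(* (a, j_1, ..., j_{r-1}) as an element of E^r *)
Definition consr n r (a : 'I_n) (j : 'I_r.-1 -> 'I_n) : 'I_r -> 'I_n :=
  fun t => (match nat_of_ord t as m return m < r -> 'I_n with
            | 0 => fun _ => a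
            | k.+1 => fun H => j (Ordinal (lt_pred_aux H))
            end) (ltn_ord t).

(* the terms (-1)^k phi(i_1..^i_k..i_{r+1}) phi(i_k, j_1..j_{r-1}), k = 1..r+1 *)
Definition GP_terms (F : hyperfield) n r (phi : ('I_r -> 'I_n) -> F)
    (i : 'I_r.+1 -> 'I_n) (j : 'I_r.-1 -> 'I_n) : seq F :=
  [seq hmul (hmul (signpow F (nat_of_ord k).+1) (phi (fun t : 'I_r => i (lift k t))))
            (phi (consr (i k) j)) | k : 'I_r.+1 <- enum 'I_r.+1].

Definition GP_rel (F : hyperfield) n r (phi : ('I_r -> 'I_n) -> F) i j :=
  hsum (GP_terms phi i j) hzero.

Definition strongGP (F : hyperfield) n r (phi : ('I_r -> 'I_n) -> F) :=
  (exists i, phi i <> hzero) /\ alternating phi /\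
  (forall i j, 0 < r -> GP_rel phi i j).

Definition matroid_bases n (B : {set 'I_n} -> Prop) :=
  (exists b, B b) /\
  forall B1 B2, B B1 -> B B2 -> forall x, x \in B1 :\: B2 ->
    exists y, y \in B2 :\: B1 /\ B (y |: (B1 :\ x)).

Definition support (F : hyperfield) n r (phi : ('I_r -> 'I_n) -> F) : {set 'I_n} -> Prop :=
  fun B => exists i, phi i <> hzero /\ B = [set i t | t : 'I_r].

Definition weakGP (F : hyperfield) n r (phi : ('I_r -> 'I_n) -> F) :=
  (exists i, phi i <> hzero) /\ alternating phi /\
  matroid_bases (support phi) /\
  (forall i j, 0 < r ->
     #|[set i t | t : 'I_r.+1] :\: [set j t | t : 'I_r.-1]| = 3 -> GP_rel phi i j).

Inductive gr_kind := Strong | Weak.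

Definition GP (k : gr_kind) (F : hyperfield) n r (phi : ('I_r -> 'I_n) -> F) :=
  match k with Strong => strongGP phi | Weak => weakGP phi end.

(* (F^{E^r} \ {0}) / F^x and the Grassmannians as sets of classes.     *)

Definition nonzero_fun (F : hyperfield) n r (phi : ('I_r -> 'I_n) -> F) :=
  exists i, phi i <> hzero.

Definition nzfun (F : hyperfield) n r := {phi : ('I_r -> 'I_n) -> F | nonzero_fun phi}.

Definition cls (F : hyperfield) n r (phi : ('I_r -> 'I_n) -> F) : (('I_r -> 'I_n) -> F) -> Prop :=
  fun psi => exists a : F, a <> hzero /\ psi = (fun i => hmul a (phi i)).

Definition projQ_space (F : hyperfield) n r :=
  {c : (('I_r -> 'I_n) -> F) -> Prop | exists phi : nzfun F n r, c = cls (proj1_sig phi)}.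

Definition projQ (F : hyperfield) n r (phi : nzfun F n r) : projQ_space F n r :=
  exist _ (cls (proj1_sig phi)) (ex_intro _ phi erefl).

Definition quot_top (F : hyperfield) n r (T : opens F) : opens (projQ_space F n r) :=
  fun U => sub_top (prod_fun_top ('I_r -> 'I_n) T) (@nonzero_fun F n r)
                   (fun x => U (@projQ F n r x)).
Arguments quot_top {F} n r T.

Definition in_Gr (k : gr_kind) (F : hyperfield) n r (c : projQ_space F n r) :=
  exists phi, proj1_sig c phi /\ GP k phi.

Definition Gr (k : gr_kind) (F : hyperfield) n r := {c : projQ_space F n r | in_Gr k c}.

Definition Gr_top (k : gr_kind) (F : hyperfield) n r (T : opens F) : opens (Gr k F n r) :=
  sub_top (quot_top n r T) (@in_Gr k F n r).
Arguments Gr_top k {F} n r T.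

(* c lies in Gr(f)^{-1}(M), i.e. [f o phi] = M for phi in c *)
Definition in_Real (k : gr_kind) (F F' : hyperfield) (f : hmorph F F') n r
    (M : Gr k F' n r) (c : Gr k F n r) :=
  exists phi, proj1_sig (proj1_sig c) phi /\ proj1_sig (proj1_sig M) (fun i => f (phi i)).

Definition Real (k : gr_kind) (F F' : hyperfield) (f : hmorph F F') n r (M : Gr k F' n r) :=
  {c : Gr k F n r | in_Real f M c}.

Definition Real_top (k : gr_kind) (F F' : hyperfield) (T : opens F) (f : hmorph F F') n r
    (M : Gr k F' n r) : opens (Real f M) :=
  sub_top (Gr_top k n r T) (in_Real f M).
Arguments Real_top {k F F'} T f {n r} M.

(* Main.v *)
Require Import Defs.
From HB Require Import structures.
From mathcomp Require Import all_boot.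
From Stdlib Require Import FunctionalExtensionality PropExtensionality IndefiniteDescription Classical.
Set Implicit Arguments. Unset Strict Implicit. Unset Printing Implicit Defensive.

Lemma T_ext X (T : opens X) (U U' : X -> Prop) : T U -> (forall x, U x <-> U' x) -> T U'.
Proof.
move=> H E. have ->: U' = U; last exact H.
apply: functional_extensionality => x; apply: propositional_extensionality; split; apply E.
Qed.

Lemma choice_fun (A B : Type) (P : A -> B -> Prop) :
  (forall a, exists b, P a b) -> exists g, forall a, P a (g a).
Proof.
move=> H. exists (fun a => proj1_sig (constructive_indefinite_description _ (H a))).
move=> a; exact: (proj2_sig (constructive_indefinite_description _ (H a))).
Qed.

Section HF.
Variable F : hyperfield.
Variable T : opens F.
Hypothesis HT : top_hyperfield T.

Lemma topT : T (fun _ => True).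
Proof. by case: HT => [[H _] _]. Qed.

Lemma interT U V : T U -> T V -> T (fun x => U x /\ V x).
Proof. by case: HT => [[_ [H _]] _]; apply: H. Qed.

Lemma nzT : T (fun x : F => x <> hzero).
Proof. by case: HT => [_ [H _]]. Qed.

Lemma mul_nbhd V a b : T V -> V (hmul a b) -> exists A B, T A /\ T B /\ A a /\ B b /\
   forall x y, A x -> B y -> V (hmul x y).
Proof.
case: HT => [_ [_ [Hmul _]]] TV Vab.
have [A [B [TA [TB [Aa [Bb H]]]]]] := Hmul V TV (a, b) Vab.
exists A, B; do 4 (split => //). move=> x y Ax By; exact: (H (x, y)).
Qed.

Lemma scale_open a V : T V -> T (fun x => V (hmul a x)).
Proof.
case: HT => [[_ [_ Hunion]] _] TV.
pose I := {G : F -> Prop | T G /\ forall y, G y -> V (hmul a y)}.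
apply: (T_ext (Hunion I (fun i => proj1_sig i) (fun i => proj1 (proj2_sig i)))).
move=> x; split.
- case=> [[G [_ HG]] /= Gx]; exact: HG.
- move=> Hx. have [A [B [TA [TB [Aa [Bx HAB]]]]]] := mul_nbhd TV Hx.
  exists (exist _ B (conj TB (fun y By => HAB a y Aa By))). exact Bx.
Qed.

Lemma inv_nbhd V a : T V -> a <> hzero -> V (hinv a) -> exists G, T G /\ G a /\
   forall x, x <> hzero -> G x -> V (hinv x).
Proof.
case: HT => [_ [_ [_ Hinv]]] TV Ha Va.
have HU : sub_top T (fun x : F => x <> hzero) (fun x => V (proj1_sig x)).
  by exists V; split.
have [G [TG HG]] := Hinv _ HU.
exists G; split => //; split.
- by apply/(HG (exist _ a Ha)).
- move=> x Hx Gx. by apply/(HG (exist _ x Hx)).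
Qed.

Lemma finite_inter (I : Type) (l : seq I) (P : I -> F -> Prop) :
  (forall i, T (P i)) -> T (fun x => forall i, inL i l -> P i x).
Proof.
move=> HP; elim: l => [|a l IH].
- apply: (T_ext topT) => x; split => // _ i [].
- apply: (T_ext (interT (HP a) IH)) => x; split.
  + by case=> Ha Hl i /= [<-|Hi]; [exact Ha| exact: Hl].
  + move=> H; split; first by apply: H; left.
    by move=> i Hi; apply: H; right.
Qed.
End HF.

Lemma hmul_iden (F : hyperfield) (a p0 u c pi : F) :
  hmul (hmul c p0) u = hone -> hmul (hmul (hmul a p0) u) (hmul c pi) = hmul a pi.
Proof.
move=> E.
have E1 : hmul (hmul (hmul a p0) u) (hmul c pi) = hmul (hmul a pi) (hmul (hmul c p0) u).
  rewrite -!hmulA. congr (hmul a).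
  rewrite hmulA (hmulA pi) (hmulC pi c). exact: hmulC.
by rewrite E1 E hmulC hmul1.
Qed.

Lemma cls_scale (F : hyperfield) n r (g : ('I_r -> 'I_n) -> F) b :
  b <> hzero -> cls (fun i => hmul b (g i)) = cls g.
Proof.
move=> Hb; apply: functional_extensionality => psi; apply: propositional_extensionality.
split.
- case=> [a [Ha ->]]. exists (hmul a b); split; first exact: hmul_neq0.
  by apply: functional_extensionality => i; rewrite hmulA.
- case=> [a [Ha ->]]. exists (hmul a (hinv b)); split.
    by apply: hmul_neq0 => //; apply: hinv_neq0.
  apply: functional_extensionality => i.
  by rewrite -hmulA (hmulA (hinv b)) (hmulC (hinv b)) hmulV // hmul1.
Qed.

Lemma projQ_eq (F : hyperfield) n r (c : projQ_space F n r) (x : nzfun F n r) :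
  proj1_sig c = cls (proj1_sig x) -> c = projQ x.
Proof.
case: c => c Hc /= E. subst c. rewrite /projQ. f_equal. apply: proof_irrelevance.
Qed.

Lemma nz_scale (F : hyperfield) n r (g : ('I_r -> 'I_n) -> F) b :
  nonzero_fun g -> b <> hzero -> nonzero_fun (fun i => hmul b (g i)).
Proof. by case=> i Hi Hb; exists i; apply: hmul_neq0. Qed.

Lemma member_cls (F : hyperfield) n r (c : projQ_space F n r) phi :
  proj1_sig c phi -> nonzero_fun phi /\ proj1_sig c = cls phi.
Proof.
case: c => c Hc /=; case: (Hc) => psi Ec; rewrite Ec => -[a [Ha ->]]. split.
- apply: nz_scale => //. exact: (proj2_sig psi).
- by rewrite cls_scale.
Qed.

Lemma f_nz (F F' : hyperfield) (f : hmorph F F') x : x <> hzero -> f x <> hzero.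
Proof.
move=> Hx E. have := hmM f x (hinv x). rewrite hmulV // hm1 E hmul0 => H.
by apply: (@hone_neq0 F'); rewrite H.
Qed.

Lemma f_inv (F F' : hyperfield) (f : hmorph F F') x : x <> hzero ->
  hmul (f x) (f (hinv x)) = hone.
Proof. by move=> Hx; rewrite -hmM hmulV // hm1. Qed.

Lemma local (F F' : hyperfield) (f : hmorph F F') (T1 T2 : opens F) n r
  (cM : (('I_r -> 'I_n) -> F') -> Prop) (O : (('I_r -> 'I_n) -> F) -> Prop) :
  top_hyperfield T1 ->
  (forall a : F', continuous (sub_top T1 (fun x => f x = a)) (sub_top T2 (fun x => f x = a)) id) ->
  (exists psi, cM = cls psi) ->
  prod_fun_top _ T2 O ->
  (forall g b, nonzero_fun g -> b <> hzero -> O (fun i => hmul b (g i)) -> O g) ->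
  forall phi, nonzero_fun phi -> cM (fun i => f (phi i)) -> O phi ->
  exists l (V : _ -> F -> Prop), (forall i, T1 (V i)) /\ (forall i, inL i l -> V i (phi i)) /\
    (forall h, nonzero_fun h -> cM (fun i => f (h i)) -> (forall i, inL i l -> V i (h i)) -> O h).
Proof.
move=> HT1 Hfib [psi EM] HO Hsat phi Hnz HMphi Ophi.
have [l [V [TV [Vphi HVO]]]] := HO phi Ophi.
case: Hnz => i0 Hi0.
have HC1 : forall i, exists Vpi : F -> Prop, T1 Vpi /\
    (forall y, f y = f (phi i) -> (V i y <-> Vpi y)).
  move=> i.
  have HU : sub_top T2 (fun x => f x = f (phi i)) (fun x => V i (proj1_sig x)).
    by exists (V i); split.
  have [G [TG HG]] := Hfib (f (phi i)) _ HU.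
  exists G; split => // y fy. exact: (HG (exist _ y fy)).
have [Vp HVp] := choice_fun HC1.
have HC2 : forall i, exists ABi : (F -> Prop) * (F -> Prop),
   T1 ABi.1 /\ T1 ABi.2 /\ ABi.1 (hmul (phi i0) (hinv (phi i0))) /\ ABi.2 (phi i) /\
   (inL i l -> forall x y, ABi.1 x -> ABi.2 y -> Vp i (hmul x y)).
  move=> i.
  case: (classic (inL i l)) => Hil.
  - have Vpi : Vp i (hmul (hmul (phi i0) (hinv (phi i0))) (phi i)).
      rewrite hmulV // hmul1. by apply/(proj2 (HVp i)) => //; apply: Vphi.
    have [A [B [TA [TB [Aa [Bb HAB]]]]]] := mul_nbhd HT1 (proj1 (HVp i)) Vpi.
    by exists (A, B).
  - exists ((fun _ => True), (fun _ => True)) => /=.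
    split; [exact: topT HT1|]; split; [exact: topT HT1|]. by do 2 split => //.
have [AB HAB] := choice_fun HC2.
have HC3 : forall i, exists Gi : F -> Prop, T1 Gi /\ Gi (phi i0) /\
   (inL i l -> forall x, x <> hzero -> Gi x -> (AB i).1 (hmul (phi i0) (hinv x))).
  move=> i. case: (HAB i) => TA [_ [Aa _]].
  have [Gi [TG [Ga HGi]]] := inv_nbhd HT1 (scale_open HT1 (phi i0) TA) Hi0 Aa.
  by exists Gi; split => //; split => // _.
have [G HG] := choice_fun HC3.
pose Gall x := forall i, inL i l -> G i x.
have TGall : T1 Gall := finite_inter HT1 l (fun i => proj1 (HG i)).
pose V2 i x := (AB i).2 x /\ (i = i0 -> x <> hzero /\ Gall x).
exists (i0 :: l), V2. split; [|split].
- move=> i. case: (classic (i = i0)) => Hi.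
  + apply: (T_ext (interT HT1 (proj1 (proj2 (HAB i))) (interT HT1 (nzT HT1) TGall))).
    move=> x; rewrite /V2; split.
    * by case=> H1 H2; split.
    * by case=> H1 H2; split => //; apply: H2.
  + apply: (T_ext (proj1 (proj2 (HAB i)))) => x; rewrite /V2; split.
    * by move=> H; split => // E; case: (Hi E).
    * by case.
- move=> i _; rewrite /V2; split; first by case: (HAB i) => _ [_ [_ [H _]]].
  move=> ->; split => //. move=> j _; by case: (HG j) => _ [H _].
- move=> h Hhnz HMh HV2.
  have [Hh0 HGh] : h i0 <> hzero /\ Gall (h i0) by apply: (proj2 (HV2 i0 (or_introl erefl))).
  have Hb : hmul (phi i0) (hinv (h i0)) <> hzero by apply: hmul_neq0 => //; apply: hinv_neq0.
  apply: (Hsat h _ Hhnz Hb). apply: HVO => i Hil.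
  have Hf : f (hmul (hmul (phi i0) (hinv (h i0))) (h i)) = f (phi i).
    move: HMphi HMh; rewrite EM => -[a [Ha Ea]] [c [Hc Ec]].
    have Ea0 : f (phi i0) = hmul a (psi i0) := equal_f Ea i0.
    have Eai : f (phi i) = hmul a (psi i) := equal_f Ea i.
    have Ec0 : f (h i0) = hmul c (psi i0) := equal_f Ec i0.
    have Eci : f (h i) = hmul c (psi i) := equal_f Ec i.
    rewrite !hmM Ea0 Eci Eai. apply: hmul_iden. rewrite -Ec0. exact: f_inv.
  apply/(proj2 (HVp i) _ Hf).
  case: (HAB i) => _ [_ [_ [_ Hm]]]. apply: (Hm Hil).
  + by case: (HG i) => _ [_ H]; apply: (H Hil _ Hh0 (HGh i Hil)).
  + by case: (HV2 i (or_intror Hil)).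
Qed.

Lemma key (F F' : hyperfield) (f : hmorph F F') (T1 T2 : opens F) :
  top_hyperfield T1 ->
  (forall a : F', continuous (sub_top T1 (fun x => f x = a)) (sub_top T2 (fun x => f x = a)) id) ->
  forall k r n (M : Gr k F' n r), continuous (Real_top T1 f M) (Real_top T2 f M) id.
Proof.
move=> HT1 Hfib k r n M U [V [[W [[O [HO HOW]] HWV]] HVU]].
pose cM := proj1_sig (proj1_sig M).
have HcM : exists psi, cM = cls psi.
  case: (proj2_sig (proj1_sig M)) => psi E; by exists (proj1_sig psi).
have Osat : forall g b, nonzero_fun g -> b <> hzero -> (O (fun i => hmul b (g i)) <-> O g).
  move=> g b Hg Hb.
  have E1 := HOW (exist _ g Hg); have E2 := HOW (exist _ _ (nz_scale Hg Hb)).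
  rewrite (projQ_eq (x := exist _ g Hg) (c := projQ (exist _ _ (nz_scale Hg Hb)))) in E2;
    last by rewrite /= cls_scale.
  simpl in *. tauto.
pose X h := nonzero_fun h /\ cM (fun i => f (h i)).
pose O1 (g : ('I_r -> 'I_n) -> F) := exists l (V0 : ('I_r -> 'I_n) -> F -> Prop),
  (forall i, T1 (V0 i)) /\ (forall i, inL i l -> V0 i (g i)) /\
  (forall h, X h -> (forall i, inL i l -> V0 i (h i)) -> O h).
pose O' (x : ('I_r -> 'I_n) -> F) := exists b, b <> hzero /\ O1 (fun i => hmul b (x i)).
have HO' : prod_fun_top _ T1 O'.
  move=> x [b [Hb [l [V0 [TV0 [Vx HV0]]]]]].
  exists l, (fun i z => V0 i (hmul b z)). split. move=> i /=. exact (scale_open HT1 b (TV0 i)).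
  split => // g Hg. by exists b; split => //; exists l, V0.
have keyeq : forall phi, X phi -> (O phi <-> O' phi).
  move=> phi [Hnz HMphi]; split.
  - move=> Ophi. exists hone; split; first exact: hone_neq0.
    have -> : (fun i => hmul hone (phi i)) = phi.
      by apply: functional_extensionality => i; rewrite hmul1.
    have [l [V0 [TV0 [Vphi HV0]]]] := local HT1 Hfib HcM HO
       (fun g b Hg Hb => proj1 (Osat g b Hg Hb)) Hnz HMphi Ophi.
    exists l, V0; split => //; split => // h [Hh1 Hh2]; exact: HV0.
  - case=> b [Hb [l [V0 [_ [Vb HV0]]]]].
    apply/(Osat phi b Hnz Hb). apply: HV0 Vb. split; first exact: nz_scale.
    move: HMphi; case: HcM => psi E; rewrite E => -[a [Ha Ea]].
    exists (hmul (f b) a); split; first by apply: hmul_neq0 => //; exact: f_nz.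
    apply: functional_extensionality => i. rewrite hmM.
    have Ei : f (phi i) = hmul a (psi i) := equal_f Ea i.
    by rewrite Ei hmulA.
pose W' (c : projQ_space F n r) := exists phi, proj1_sig c phi /\ O' phi.
have HW' : forall x : nzfun F n r, W' (projQ x) <-> O' (proj1_sig x).
  move=> [x Hx] /=; split.
  - case=> phi [[a [Ha ->]] [b [Hb HO1]]]. exists (hmul b a); split; first exact: hmul_neq0.
    have <- : (fun i => hmul b (hmul a (x i))) = (fun i => hmul (hmul b a) (x i)).
      by apply: functional_extensionality => i; rewrite hmulA.
    exact HO1.
  - move=> Hx'. exists x; split => //. exists hone; split; first exact: hone_neq0.
    by apply: functional_extensionality => i; rewrite hmul1.
exists (fun c : Gr k F n r => W' (proj1_sig c)). split.
- exists W'; split; last by move=> c; split.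
  by exists O'; split.
- case=> c Hc /=.
  have E2 := HVU (exist _ c Hc); have E1 := HWV c.
  have [phi [Hphi HMphi]] := Hc.
  have [Hnz Ec] := member_cls Hphi.
  have Eq := projQ_eq (x := exist _ phi Hnz) Ec.
  have E3 := HOW (exist _ phi Hnz). have E4 := HW' (exist _ phi Hnz).
  rewrite -Eq in E3 E4. simpl in *.
  have E5 := keyeq phi (conj Hnz HMphi).
  rewrite /id. tauto.
Qed.

Theorem lemma5p1 (F F' : hyperfield) (f : hmorph F F') (T1 T2 : opens F) :
  top_hyperfield T1 -> top_hyperfield T2 ->
  (forall a : F', homeomorphism (sub_top T1 (fun x => f x = a))
                                (sub_top T2 (fun x => f x = a)) id) ->
  forall (k : gr_kind) (r n : nat) (M : Gr k F' n r),
    homeomorphism (Real_top T1 f M) (Real_top T2 f M) id.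
Proof.
move=> HT1 HT2 Hhom k r n M.
have cont : forall a, continuous (sub_top T1 (fun x => f x = a)) (sub_top T2 (fun x => f x = a)) id /\
   continuous (sub_top T2 (fun x => f x = a)) (sub_top T1 (fun x => f x = a)) id.
  move=> a; case: (Hhom a) => g [_ [Hg [C1 C2]]]; split => //.
  have Eg : g = id by apply: functional_extensionality => x; exact: Hg.
  by rewrite Eg in C2.
exists id; split => //; split => //; split.
- apply: key => // a; exact: (proj1 (cont a)).
- apply: key => // a; exact: (proj2 (cont a)).
Qed.
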